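(* Let $(W,S)$ be an irreducible right-angled Coxeter system and let $w\in W$. Suppose $t_1,\dots,t_n\in S$ satisfy (1) $t_1\notin S(w)$, (2) $o(t_it_{i+1})=\infty$ for all $i\in\{1,\dots,n-1\}$, and (3) $\{t_1,\dots,t_n\}=S$. Then $w t_1t_2\cdots t_n\in W^{\{t_n\}}$.
   Context: A Coxeter system $(W,S)$: $S$ finite, $W=\langle S\mid (st)^{m(s,t)}=1\rangle$ with $m(s,s)=1$, $m(s,t)=m(t,s)\ge2$ for $s\ne t$. Right-angled: $m(s,t)\in\{2,\infty\}$ for $s\ne t$. Irreducible: for no nonempty proper $T\subset S$ is $W=W_T\times W_{S\setminus T}$. $o(st)$ is the order of $st$; $\ell$ is word length with respect to $S$; $S(w)=\{s\in S\mid\ell(ws)<\ell(w)\}$; $W^T=\{w\in W\mid S(w)=T\}$. *)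

(* Defs.v *)
From mathcomp Require Import all_boot.
Set Implicit Arguments.
Unset Strict Implicit.
Unset Printing Implicit Defensive.

Section Coxeter.
Variable S : finType.
(* Coxeter matrix: m s t : nat, where 0 encodes m(s,t) = infinity. *)
Variable m : S -> S -> nat.

Definition coxeter_matrix : Prop :=
  (forall s, m s s = 1) /\ (forall s t, m s t = m t s) /\
  (forall s t, s != t -> m s t = 0 \/ 2 <= m s t).

Definition right_angled : Prop :=
  forall s t, s != t -> m s t = 2 \/ m s t = 0.

Definition alt_word (s t : S) (k : nat) : seq S := flatten (nseq k [:: s; t]).

(* Equality in W = < S | (st)^{m(s,t)} = 1 >: the congruence on words
   generated by the defining relations. *)
Inductive eqW : seq S -> seq S -> Prop :=
| eqW_refl u : eqW u u
| eqW_sym u v : eqW u v -> eqW v u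
| eqW_trans u v w : eqW u v -> eqW v w -> eqW u w
| eqW_rel (p q : seq S) (s t : S) :
    m s t != 0 -> eqW (p ++ alt_word s t (m s t) ++ q) (p ++ q).

(* ell(u) < ell(v) in W *)
Definition length_lt (u v : seq S) : Prop :=
  exists u', eqW u u' /\ forall v', eqW v v' -> size u' < size v'.

Definition descent (w : seq S) (s : S) : Prop := length_lt (rcons w s) w.

(* w \in W^T, i.e. S(w) = T *)
Definition in_WT (T : {set S}) (w : seq S) : Prop :=
  forall s, descent w s <-> s \in T.

Definition order_inf (s t : S) : Prop :=
  forall k, 0 < k -> ~ eqW (alt_word s t k) [::].

Definition in_parabolic (T : {set S}) (u : seq S) : Prop :=
  exists v, eqW u v /\ all (fun x => x \in T) v.

Definition direct_product (T U : {set S}) : Prop :=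
  [/\ (forall a b, in_parabolic T a -> in_parabolic U b -> eqW (a ++ b) (b ++ a)),
      (forall a, in_parabolic T a -> in_parabolic U a -> eqW a [::]) &
      (forall w, exists a b, [/\ in_parabolic T a, in_parabolic U b & eqW w (a ++ b)])].

Definition irreducible : Prop :=
  forall T : {set S}, T != set0 -> T != setT -> ~ direct_product T (~: T).

End Coxeter.

(* Main.v *)
Require Import Defs.
From mathcomp Require Import all_boot.
From mathcomp Require Import zify.
Set Implicit Arguments.
Unset Strict Implicit.
Unset Printing Implicit Defensive.

Section RACG.
Variable S : finType.
Variable m : S -> S -> nat.
Hypothesis Hsym : forall s t, m s t = m t s.
Hypothesis Hmss : forall s, m s s = 1.
Hypothesis Hra : right_angled m.

Definition dep a b := m a b != 2.
Lemma depC a b : dep a b = dep b a. Proof. by rewrite /dep Hsym. Qed.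
Lemma depxx a : dep a a. Proof. by rewrite /dep Hmss. Qed.

Definition prj a b (v : seq S) := filter (fun x => (x == a) || (x == b)) v.
Lemma prj_cat a b u v : prj a b (u ++ v) = prj a b u ++ prj a b v.
Proof. exact: filter_cat. Qed.
Lemma prj_cons a b x v : prj a b (x :: v) =
  if (x == a) || (x == b) then x :: prj a b v else prj a b v.
Proof. by []. Qed.
Lemma prj_rcons a b x v : prj a b (rcons v x) =
  if (x == a) || (x == b) then rcons (prj a b v) x else prj a b v.
Proof. exact: filter_rcons. Qed.

Definition cnd (v : seq S) s := (prj s s v != [::]) &&
  [forall b, dep s b ==> (last s (prj s b v) == s)].
Definition remlast s (v : seq S) := rev (rem s (rev v)).
Definition appl v s := if cnd v s then remlast s v else rcons v s.
Definition eqv v v' := forall a b, dep a b -> prj a b v = prj a b v'.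

Lemma eqv_refl v : eqv v v. Proof. by []. Qed.
Lemma eqv_sym v v' : eqv v v' -> eqv v' v.
Proof. by move=> E a b h; rewrite E. Qed.
Lemma eqv_trans v1 v2 v3 : eqv v1 v2 -> eqv v2 v3 -> eqv v1 v3.
Proof. by move=> E1 E2 a b h; rewrite E1 // E2. Qed.

Lemma cnd_prj t v v' : (forall b, dep t b -> prj t b v = prj t b v') ->
  cnd v t = cnd v' t.
Proof.
move=> E; rewrite /cnd (E t (depxx t)); congr (_ && _).
apply: eq_forallb => b; case: (boolP (dep t b)) => // h; by rewrite E.
Qed.

Lemma cnd_eqv v v' t : eqv v v' -> cnd v t = cnd v' t.
Proof. by move=> E; apply: cnd_prj => b; apply: E. Qed.

Lemma split_last (s : S) v : s \in v -> exists a c, v = a ++ s :: c /\ s \notin c.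
Proof.
elim/last_ind: v => [|v x IH] //.
rewrite -cats1 mem_cat mem_seq1; case: (eqVneq s x) => [-> _ | nxs].
  by exists v, [::].
rewrite orbF => /IH [a [c [-> nc]]]; exists a, (rcons c x).
by rewrite -catA /= cats1 mem_rcons in_cons negb_or nxs.
Qed.

Lemma last_notin (s : S) (l c : seq S) : l != [::] -> {subset l <= c} -> s \notin c ->
  last s l != s.
Proof.
case: l => // z l _ sub nc /=; apply/eqP => e.
have := mem_last z l; rewrite e => /sub; by rewrite (negbTE nc).
Qed.

Lemma rem_mid (s : S) l1 l2 : s \notin l1 -> rem s (l1 ++ s :: l2) = l1 ++ l2.
Proof.
elim: l1 => [|x l1 IH] /=; first by rewrite eqxx.
rewrite in_cons negb_or => /andP [h1 h2]; by rewrite eq_sym (negbTE h1) IH.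
Qed.

Lemma cnd_split v s : cnd v s -> exists a c,
  [/\ v = a ++ s :: c, s \notin c, all (fun y => ~~ dep s y) c & appl v s = a ++ c].
Proof.
move=> hc; case/andP: (hc) => hn /forallP hf.
have : s \in v.
  move: hn; rewrite /prj -has_filter => /hasP [x xv]; by rewrite orbb => /eqP <-.
case/split_last => a [c [Ev nc]].
have Hall : all (fun y => ~~ dep s y) c.
  apply/allP => y yc; apply/negP => dsy.
  have := hf y; rewrite dsy /= Ev prj_cat prj_cons eqxx /= last_cat /=.
  apply/negP; apply: last_notin nc.
    apply/eqP => e; have : y \in prj s y c by rewrite mem_filter eqxx orbT yc.
    by rewrite e.
  by move=> z; rewrite mem_filter => /andP [].
exists a, c; split => //.
rewrite /appl hc Ev /remlast rev_cat rev_cons -cats1 -catA /= rem_mid ?mem_rev //.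
by rewrite rev_cat !revK.
Qed.

Lemma prj_nil a b s c : dep a b -> (s == a) || (s == b) ->
  all (fun y => ~~ dep s y) c -> prj a b c = [::].
Proof.
move=> dab hs; elim: c => [|y c IH] //= /andP [hy hc].
rewrite IH //; case: ifP => // /orP [] /eqP ey; subst y; move: hy;
  case/orP: hs => /eqP ->; rewrite ?depxx //= ?dab // depC dab //.
Qed.

Definition Fp a b s (c : bool) (l : seq S) :=
  if (s == a) || (s == b) then (if c then take (size l).-1 l else rcons l s) else l.

Lemma Fp_id a b s c l : ~~ ((s == a) || (s == b)) -> Fp a b s c l = l.
Proof. by rewrite /Fp => /negbTE ->. Qed.

Lemma prj_app a b v s : dep a b -> prj a b (appl v s) = Fp a b s (cnd v s) (prj a b v).
Proof.
move=> dab; rewrite /Fp; case: (boolP (cnd v s)) => hc.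
  have [a' [c [Ev nc Hall ->]]] := cnd_split hc.
  rewrite Ev !prj_cat prj_cons; case: ifP => hs; rewrite ?hs //.
  by rewrite (prj_nil dab hs Hall) cats0 take_size_cat // size_cat /= addn1.
by rewrite /appl (negbTE hc) prj_rcons.
Qed.


Lemma appl_eqv v v' s : eqv v v' -> eqv (appl v s) (appl v' s).
Proof. move=> E a b dab; by rewrite !prj_app // (cnd_eqv s E) (E a b dab). Qed.

Lemma size_eqv v v' : eqv v v' -> size v = size v'.
Proof.
move=> E; apply: perm_size; apply/allP => x _ /=.
have h : forall u, count_mem x u = size (prj x x u).
  by move=> u; rewrite size_filter; apply: eq_count => y; rewrite /= orbb.
by rewrite !h (E x x (depxx x)).
Qed.

Fixpoint Rr (r : seq S) : bool :=
  if r is x :: r' then ~~ cnd (rev r') x && Rr r' else true.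
Definition Rd v := Rr (rev v).
Lemma Rd_rcons v x : Rd (rcons v x) = ~~ cnd v x && Rd v.
Proof. by rewrite /Rd rev_rcons /= revK. Qed.
Lemma Rd_cat v w : Rd (v ++ w) -> Rd v.
Proof.
elim/last_ind: w => [|w x IH]; first by rewrite cats0.
by rewrite -rcons_cat Rd_rcons => /andP [_ /IH].
Qed.

Lemma cnd_insert_indep x a s c : ~~ dep x s ->
  cnd (a ++ s :: c) x = cnd (a ++ c) x.
Proof.
move=> nd; apply: cnd_prj => b dxb; rewrite !prj_cat prj_cons.
have -> : (s == x) || (s == b) = false => //.
apply/negbTE/negP => /orP [] /eqP e; move: nd; rewrite e ?depxx //.
by rewrite dxb.
Qed.

Lemma cnd_cat_indep x a c : all (fun y => ~~ dep x y) c -> cnd (a ++ c) x = cnd a x.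
Proof.
elim: c => [|y c IH]; first by rewrite cats0.
by rewrite /= => /andP [hy hc]; rewrite cnd_insert_indep // IH.
Qed.

Lemma Rd_remove a s c : Rd (a ++ s :: c) -> all (fun y => ~~ dep s y) c -> Rd (a ++ c).
Proof.
elim/last_ind: c => [|c x IH].
  by rewrite cats0 cats1 Rd_rcons => /andP [].
rewrite all_rcons => H /andP [hx hc]; move: H.
rewrite -rcons_cons -rcons_cat Rd_rcons => /andP [nc H].
rewrite -rcons_cat Rd_rcons IH // andbT.
by rewrite -(@cnd_insert_indep x a s c) // depC.
Qed.

Lemma Rd_appl v s : Rd v -> Rd (appl v s).
Proof.
move=> Rv; case: (boolP (cnd v s)) => hc.
  have [a [c [Ev _ Hall ->]]] := cnd_split hc.
  by apply: Rd_remove Hall; rewrite -Ev.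
by rewrite /appl (negbTE hc) Rd_rcons hc Rv.
Qed.

Lemma cnd_rcons_same v s : cnd (rcons v s) s.
Proof.
apply/andP; split; first by rewrite prj_rcons eqxx /=; case: (prj s s v).
apply/forallP => b; apply/implyP => _; by rewrite prj_rcons eqxx /= last_rcons.
Qed.

Lemma appl_rcons_same v s : appl (rcons v s) s = v.
Proof.
by rewrite /appl cnd_rcons_same /remlast rev_rcons /= eqxx revK.
Qed.

Lemma appl_appl v s : Rd v -> eqv (appl (appl v s) s) v.
Proof.
move=> Rv; case: (boolP (cnd v s)) => hc; last first.
  have -> : appl v s = rcons v s by rewrite /appl (negbTE hc).
  by rewrite appl_rcons_same.
have [a [c [Ev nc Hall Hv]]] := cnd_split hc; rewrite Hv.
have hc' : ~~ cnd (a ++ c) s.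
  rewrite cnd_cat_indep //; move: Rv; rewrite Ev -cat_rcons => /Rd_cat.
  by rewrite Rd_rcons => /andP [].
rewrite /appl (negbTE hc') Ev => p q dpq.
rewrite prj_rcons !prj_cat prj_cons; case: ifP => hs //.
by rewrite (prj_nil dpq hs Hall) cats0 cats1.
Qed.

Lemma not_both a b s t : dep a b -> ~~ dep s t -> (s == a) || (s == b) ->
  ~~ ((t == a) || (t == b)).
Proof.
move=> dab nd /orP [] /eqP es; apply/negP => /orP [] /eqP et;
  move: nd; rewrite es et ?depxx ?dab //= depC dab //.
Qed.

Lemma swap v s t : ~~ dep s t -> eqv (appl (appl v s) t) (appl (appl v t) s).
Proof.
move=> nd a b dab; rewrite !prj_app //.
have nd' : ~~ dep t s by rewrite depC.
have ct : cnd (appl v s) t = cnd v t.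
  apply: cnd_prj => b' dtb; rewrite prj_app // Fp_id //.
  by apply: (not_both dtb nd'); rewrite eqxx.
have cs : cnd (appl v t) s = cnd v s.
  apply: cnd_prj => b' dtb; rewrite prj_app // Fp_id //.
  by apply: (not_both dtb nd); rewrite eqxx.
rewrite ct cs; case: (boolP ((s == a) || (s == b))) => hs.
  have ht := not_both dab nd hs.
  by rewrite (Fp_id _ _ ht) (Fp_id _ _ ht).
by rewrite (Fp_id _ _ hs) (Fp_id _ _ hs).
Qed.


Definition redw u := foldl appl [::] u.

Lemma Rd_foldl v u : Rd v -> Rd (foldl appl v u).
Proof. elim: u v => //= x u IH v Rv; apply: IH; exact: Rd_appl. Qed.

Lemma eqv_foldl v v' u : eqv v v' -> eqv (foldl appl v u) (foldl appl v' u).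
Proof. elim: u v v' => //= x u IH v v' E; apply: IH; exact: appl_eqv. Qed.

Lemma rel_eqv v s t : Rd v -> m s t != 0 ->
  eqv (foldl appl v (alt_word s t (m s t))) v.
Proof.
move=> Rv hm; case: (eqVneq s t) => [<-|nst].
  by rewrite Hmss /=; apply: appl_appl.
have m2 : m s t = 2 by case: (Hra nst) => // e; rewrite e in hm.
rewrite m2 /=.
have nd : ~~ dep s t by rewrite /dep m2 negbK.
have nd' : ~~ dep t s by rewrite depC.
set v1 := appl v s.
apply: (@eqv_trans _ (appl (appl (appl v1 s) t) t)).
  by apply: appl_eqv; apply: swap.
apply: (@eqv_trans _ (appl (appl v t) t)); last exact: appl_appl.
by do 2 apply: appl_eqv; apply: appl_appl.
Qed.

Lemma eqW_red u v : eqW m u v -> eqv (redw u) (redw v).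
Proof.
elim => {u v} [u|u v _ IH|u v w _ IH1 _ IH2|p q s t hm].
- exact: eqv_refl.
- exact: eqv_sym.
- exact: eqv_trans IH1 IH2.
rewrite /redw !foldl_cat; apply: eqv_foldl; apply: rel_eqv => //.
exact: Rd_foldl.
Qed.

Lemma eqW_cong p q u v : eqW m u v -> eqW m (p ++ u ++ q) (p ++ v ++ q).
Proof.
elim => {u v} [u|u v _ IH|u v w _ IH1 _ IH2|p0 q0 s t hm].
- exact: eqW_refl.
- exact: eqW_sym.
- exact: eqW_trans IH1 IH2.
have := eqW_rel (p ++ p0) (q0 ++ q) hm; by rewrite -!catA.
Qed.

Lemma eqW_congl p u v : eqW m u v -> eqW m (p ++ u) (p ++ v).
Proof. by move=> h; have := eqW_cong p [::] h; rewrite !cats0. Qed.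

Lemma rel1 p q s : eqW m (p ++ [:: s; s] ++ q) (p ++ q).
Proof. have := @eqW_rel S m p q s s; rewrite Hmss; apply. by []. Qed.

Lemma rel2 p q s t : m s t = 2 -> eqW m (p ++ [:: s; t; s; t] ++ q) (p ++ q).
Proof. move=> h; have := @eqW_rel S m p q s t; rewrite h; apply. by []. Qed.

Lemma comm s y : m s y = 2 -> eqW m [:: s; y] [:: y; s].
Proof.
move=> h; have h' : m y s = 2 by rewrite Hsym.
have e1 := rel2 [::] [:: s; y] h'.
have e2 := rel1 [:: y; s; y] [:: y] s.
have e3 := rel1 [:: y; s] [::] y.
rewrite /= in e1 e2 e3.
exact: eqW_trans (eqW_sym e1) (eqW_trans e2 e3).
Qed.

Lemma comm_seq s c : all (fun y => ~~ dep s y) c -> eqW m (s :: c ++ [:: s]) c.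
Proof.
elim: c => [|y c IH] /=; first by move=> _; exact: (rel1 [::] [::] s).
case/andP => hy hc.
have hy2 : m s y = 2 by move: hy; rewrite /dep negbK => /eqP.
apply: eqW_trans (eqW_cong [::] (c ++ [:: s]) (comm hy2)) _.
exact: (eqW_congl [:: y] (IH hc)).
Qed.

Lemma appl_eqW v s : eqW m (appl v s) (rcons v s).
Proof.
case: (boolP (cnd v s)) => hc; last by rewrite /appl (negbTE hc); apply: eqW_refl.
have [a [c [Ev _ Hall ->]]] := cnd_split hc.
rewrite Ev -cats1 -catA; apply: eqW_sym; apply: eqW_congl; exact: comm_seq.
Qed.

Lemma redw_rcons u x : redw (rcons u x) = appl (redw u) x.
Proof. by rewrite /redw foldl_rcons. Qed.

Lemma red_eqW u : eqW m (redw u) u.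
Proof.
elim/last_ind: u => [|u x IH]; first exact: eqW_refl.
rewrite redw_rcons; apply: eqW_trans (appl_eqW _ _) _.
rewrite -!cats1; exact: (eqW_cong [::] [:: x] IH).
Qed.

Lemma size_appl v s : size (appl v s) = if cnd v s then (size v).-1 else (size v).+1.
Proof.
case: (boolP (cnd v s)) => hc.
  have [a [c [Ev _ _ ->]]] := cnd_split hc; by rewrite Ev !size_cat /= addnS.
by rewrite /appl (negbTE hc) size_rcons.
Qed.

Lemma size_red u : size (redw u) <= size u.
Proof.
elim/last_ind: u => // u x IH.
rewrite redw_rcons size_appl size_rcons; case: ifP => _; lia.
Qed.

Definition Lw u := size (redw u).

Lemma Lw_eqW u v : eqW m u v -> Lw u = Lw v.
Proof. by move=> h; apply: size_eqv; apply: eqW_red. Qed.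

Lemma length_ltE u v : length_lt m u v <-> Lw u < Lw v.
Proof.
split.
  case=> u' [hu hv]; rewrite (Lw_eqW hu).
  apply: leq_ltn_trans (size_red u') _; apply: hv; exact: eqW_sym (red_eqW v).
move=> h; exists (redw u); split; first exact: eqW_sym (red_eqW u).
move=> v' hv; apply: leq_trans h _; rewrite (Lw_eqW hv); exact: size_red.
Qed.

Lemma descentE w s : descent m w s <-> cnd (redw w) s.
Proof.
rewrite /descent length_ltE /Lw redw_rcons size_appl; case: ifP => hc.
  split => // _; move: hc; case: (redw w) => [|x l] //.
by rewrite ltnNge leqnSn; split.
Qed.

Definition Dp a b := (a != b) && dep a b.

Lemma oinf_D a b : order_inf m a b -> Dp a b.
Proof.
move=> h; have m0 : m a b = 0.
  apply/eqP; apply/negPn/negP => hm; apply: (h (m a b)); first by rewrite lt0n.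
  by have := eqW_rel [::] [::] hm; rewrite /= cats0.
rewrite /Dp /dep m0 andbT; apply/eqP => e; subst; by rewrite Hmss in m0.
Qed.

Lemma cnd_block v y q s : dep s y -> y != s -> s \notin y :: q ->
  ~~ cnd (v ++ y :: q) s.
Proof.
move=> dsy ys ns; apply/negP => /andP [_ /forallP /(_ y)].
rewrite dsy /= prj_cat prj_cons eqxx orbT last_cat /=.
have sub : {subset y :: prj s y q <= y :: q}.
  by move=> z; rewrite !in_cons mem_filter => /orP [->|/andP [_ ->]]; rewrite ?orbT.
have := @last_notin s (y :: prj s y q) (y :: q) isT sub ns.
by rewrite /= => /negbTE ->.
Qed.

Lemma chain_app ts : forall v t1, ~~ cnd v t1 -> path Dp t1 ts ->
  foldl appl v (t1 :: ts) = v ++ t1 :: ts.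
Proof.
elim: ts => [|t2 ts IH] v t1 hc.
  have e : appl v t1 = rcons v t1 by rewrite /appl (negbTE hc).
  by move=> _; rewrite cats1 -e.
case/andP => /andP [n12 d12] hp.
have -> : foldl appl v [:: t1, t2 & ts] = foldl appl (appl v t1) (t2 :: ts) by [].
have e : appl v t1 = rcons v t1 by rewrite /appl (negbTE hc).
rewrite e (IH _ t2) ?cat_rcons //.
rewrite -cats1; apply: cnd_block; first by rewrite depC.
  by [].
by rewrite mem_seq1 eq_sym.
Qed.

Lemma cnd_last ts : forall v t1 s, path Dp t1 ts -> s \in t1 :: ts ->
  cnd (v ++ t1 :: ts) s = (s == last t1 ts).
Proof.
elim: ts => [|t2 ts IH] v t1 s.
  by move=> _; rewrite mem_seq1 => /eqP ->; rewrite cats1 cnd_rcons_same eqxx.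
case/andP => /andP [n12 d12] hp; rewrite in_cons => /orP [/eqP -> | hs]; last first.
  by rewrite -cat_rcons IH.
case: (boolP (t1 \in t2 :: ts)) => h1.
  by rewrite -cat_rcons IH.
rewrite -cat_rcons (negbTE (cnd_block _ d12 _ h1)); last by rewrite eq_sym.
apply/esym/negbTE; rewrite /=; apply/negP => /eqP e; move: h1.
by rewrite e mem_last.
Qed.

End RACG.

Theorem lemma8p4 (S : finType) (m : S -> S -> nat)
  (Hcox : coxeter_matrix m) (Hra : right_angled m) (Hirr : irreducible m)
  (w : seq S) (t1 : S) (ts : seq S)
  (H1 : ~ descent m w t1)
  (H2 : forall i, i.+1 < size (t1 :: ts) ->
          order_inf m (nth t1 (t1 :: ts) i) (nth t1 (t1 :: ts) i.+1))
  (H3 : forall s : S, s \in t1 :: ts) :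
  in_WT m [set last t1 ts] (w ++ t1 :: ts).
Proof.
case: Hcox => Hmss [Hsym _].
have hp : path (Dp m) t1 ts.
  apply/(pathP t1) => i hi; apply: (oinf_D Hmss); exact: H2.
have hc : ~~ cnd m (redw m w) t1.
  by apply/negP => h; apply: H1; apply/(descentE Hsym Hmss Hra).
move=> s; rewrite (descentE Hsym Hmss Hra) /redw foldl_cat -/(redw m w).
by rewrite (chain_app Hsym hc hp) (cnd_last _ hp) // in_set1.
Qed.
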